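(* Let $B,C\subset\mathbb Z^b\times\{0,1\}$ be finite and let $M\in\mathcal M^B_C$ have a left inverse $N\in\mathcal M^C_B$ (i.e. $NM=I_B$). Then: (1) for every $P\in\mathcal M^B_C$ with $|\!|\!| N|\!|\!|_{s_0}|\!|\!| P|\!|\!|_{s_0}\leq1/2$, the matrix $M+P$ has a left inverse $N_P$ satisfying $|\!|\!| N_P|\!|\!|_{s_0}\leq2|\!|\!| N|\!|\!|_{s_0}$ and, for every $s\geq s_0$, $$|\!|\!| N_P|\!|\!|_s\leq\big(1+C(s)|\!|\!| N|\!|\!|_{s_0}|\!|\!| P|\!|\!|_{s_0}\big)|\!|\!| N|\!|\!|_s+C(s)|\!|\!| N|\!|\!|_{s_0}^2|\!|\!| P|\!|\!|_s\leq C(s)\big(|\!|\!| N|\!|\!|_s+|\!|\!| N|\!|\!|_{s_0}^2|\!|\!| P|\!|\!|_s\big),$$ where $C(s)$ is a constant depending only on $s$; (2) for every $P\in\mathcal M^B_C$ with $\|N\|_0\|P\|_0\leq1/2$, the matrix $M+P$ has a left inverse $N_P$ with $\|N_P\|_0\leq2\|N\|_0$.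
   Context: $d,\nu\geq1$, $b=\nu+d$, $s_0>(d+\nu)/2$ fixed. For $n\in\mathbb Z^b$, $|n|=\max_i|n_i|$, $\langle n\rangle=\max(|n|,1)$. For finite $B,C$, $\mathcal M^B_C$ is the space of complex matrices $(M_k^{k'})_{k\in C,k'\in B}$; $\overline B,\overline C$ are the projections on $\mathbb Z^b$; $M_i^{i'}$ is the block with rows $\{(i,a)\in C\}$ and columns $\{(i',a')\in B\}$. A norm $|\cdot|$ is fixed on complex matrices of size at most $2\times2$ with $|UW|\leq|U||W|$ and $|U|\leq|W|$ if $U$ is a submatrix of $W$. $[M(n)]:=\max_{i-i'=n}|M_i^{i'}|$ if $n\in\overline C-\overline B$, $0$ otherwise; $|\!|\!| M|\!|\!|_s^2:=K_0\sum_n[M(n)]^2\langle n\rangle^{2s}$, where $K_0>0$ is a fixed constant independent of $s$ such that the Sobolev norm $\|u\|_s^2=K_0\sum_i|u_i|^2\langle i\rangle^{2s}$ on $\mathbb T^b$ satisfies $\sup|u|\leq\|u\|_{s_0}$ and $\|u_1u_2\|_s\leq\frac12\|u_1\|_{s_0}\|u_2\|_s+\frac{C(s)}2\|u_1\|_s\|u_2\|_{s_0}$ for $s\geq s_0$ with $C(s)\geq 1$, $C(s_0)=1$. $\mathbf H_B$ is the space of vectors indexed by $B$, identified with column matrices, with $\|h\|_0:=|\!|\!| h|\!|\!|_0$, and $\|M\|_0:=\sup_{h\neq0}\|Mh\|_0/\|h\|_0$ is the corresponding operator norm. *)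

(* Defs.v *)
From HB Require Import structures.
From mathcomp Require Import all_boot all_order all_algebra.
From mathcomp Require Import finmap.
From mathcomp Require Import complex.
From mathcomp Require Import all_classical all_reals.
From mathcomp Require Import exp trigo.

Set Implicit Arguments.
Unset Strict Implicit.
Unset Printing Implicit Defensive.

Import Order.TTheory GRing.Theory Num.Theory.
Local Open Scope ring_scope.


Section Defs.
Variable R : realType.
Variable b : nat.

Definition Zb := 'rV[int]_b.
Definition idx := (Zb * 'I_2)%type.

Definition cabs (z : R[i]) : R := Num.sqrt (@complex.Re R z ^+ 2 + @complex.Im R z ^+ 2).

Definition supn (n : Zb) : nat := \max_(j < b) `|n ord0 j|%N.
Definition brk (n : Zb) : R := (maxn (supn n) 1)%:R.

(* A matrix (M_k^{k'})_{k in C, k' in B} is represented by a total function;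
   only the entries with k in C, k' in B are ever used below. *)
Definition cmx := idx -> idx -> R[i].
Definition cvec := idx -> R[i].

Definition rowsof (C : {fset idx}) (i : Zb) : seq 'I_2 :=
  [seq a <- enum 'I_2 | (i, a) \in C].

Definition block (C B : {fset idx}) (M : cmx) (i1 i2 : Zb)
  : 'M[R[i]]_(size (rowsof C i1), size (rowsof B i2)) :=
  \matrix_(p, q) M (i1, nth ord0 (rowsof C i1) p) (i2, nth ord0 (rowsof B i2) q).

Variable nrm : forall m n : nat, 'M[R[i]]_(m, n) -> R.
Variable K0 : R.

(* [M(n)] for M in M^B_C (rows C, columns B) *)
Definition brkM (C B : {fset idx}) (M : cmx) (n : Zb) : R :=
  \big[Num.max/0]_(k <- C) \big[Num.max/0]_(k' <- B)
     (if k.1 - k'.1 == n then nrm (block C B M k.1 k'.1) else 0).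

Definition diffs (C B : {fset idx}) : {fset Zb} := [fset (k.1 - k'.1)%R | k in C, k' in B]%fset.

Definition tnorm (s : R) (C B : {fset idx}) (M : cmx) : R :=
  Num.sqrt (K0 * \sum_(n <- diffs C B) brkM C B M n ^+ 2 * brk n `^ (2 * s)).

Definition addm (M P : cmx) : cmx := fun k k' => M k k' + P k k'.
Definition mulm (C : {fset idx}) (N M : cmx) : cmx :=
  fun k k'' => \sum_(k' <- C) N k k' * M k' k''.
Definition left_inv (B C : {fset idx}) (N M : cmx) : Prop :=
  forall k k', k \in B -> k' \in B -> mulm C N M k k' = (k == k')%:R.

(* vectors in H_B identified with column matrices (single column index (0,0)) *)
Definition colidx : idx := (0, ord0).
Definition colm (h : cvec) : cmx := fun k c => if c == colidx then h k else 0.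
Definition vnorm (B : {fset idx}) (h : cvec) : R := tnorm 0 B [fset colidx]%fset (colm h).
Definition matvec (B : {fset idx}) (M : cmx) (h : cvec) : cvec :=
  fun k => \sum_(k' <- B) M k k' * h k'.
Definition opnorm (C B : {fset idx}) (M : cmx) : R :=
  sup [set vnorm C (matvec B M h) / vnorm B h
      | h in [set h : cvec | exists2 k, k \in B & h k != 0]]%classic.

End Defs.

Definition small_mx_norm (R : realType) (nrm : forall m n : nat, 'M[R[i]]_(m, n) -> R) : Prop :=
  (forall m n (U V : 'M[R[i]]_(m, n)), (m <= 2)%N -> (n <= 2)%N ->
     [/\ 0 <= nrm _ _ U, (nrm _ _ U = 0 -> U = 0),
         (forall c : R[i], nrm _ _ (c *: U) = cabs c * nrm _ _ U)
       & nrm _ _ (U + V) <= nrm _ _ U + nrm _ _ V]) /\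
  (forall m k n (U : 'M[R[i]]_(m, k)) (W : 'M[R[i]]_(k, n)),
     (m <= 2)%N -> (k <= 2)%N -> (n <= 2)%N -> nrm _ _ (U *m W) <= nrm _ _ U * nrm _ _ W) /\
  (forall m n m' n' (U : 'M[R[i]]_(m, n)) (W : 'M[R[i]]_(m', n'))
     (f : 'I_m -> 'I_m') (g : 'I_n -> 'I_n'),
     (m' <= 2)%N -> (n' <= 2)%N ->
     {homo f : x y / (x < y)%N} -> {homo g : x y / (x < y)%N} ->
     U = \matrix_(p, q) W (f p) (g q) -> nrm _ _ U <= nrm _ _ W).

(* Trigonometric polynomials on T^b: coefficients u on a finite set S (zero elsewhere) *)
Definition sobn (R : realType) (b : nat) (K0 s : R) (S : {fset Zb b}) (u : Zb b -> R[i]) : R :=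
  Num.sqrt (K0 * \sum_(j <- S) cabs (u j) ^+ 2 * brk R j `^ (2 * s)).

Definition expi (R : realType) (t : R) : R[i] := Complex (cos t) (sin t).

Definition tpval (R : realType) (b : nat) (S : {fset Zb b}) (u : Zb b -> R[i]) (x : 'rV[R]_b)
  : R[i] := \sum_(j <- S) u j * expi (\sum_(l < b) (j ord0 l)%:~R * x ord0 l).

(* Fourier coefficients of the product u1 u2, supported on S1 + S2 *)
Definition sumset (b : nat) (S1 S2 : {fset Zb b}) : {fset Zb b} :=
  [fset (j + l)%R | j in S1, l in S2]%fset.
Definition convc (R : realType) (b : nat) (S1 : {fset Zb b}) (u1 : Zb b -> R[i])
  (S2 : {fset Zb b}) (u2 : Zb b -> R[i]) : Zb b -> R[i] :=
  fun n => \sum_(j <- S1) \sum_(l <- S2 | j + l == n) u1 j * u2 l.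

Definition sobolev_sup (R : realType) (b : nat) (K0 s0 : R) : Prop :=
  forall (S : {fset Zb b}) (u : Zb b -> R[i]) (x : 'rV[R]_b),
    cabs (tpval S u x) <= sobn K0 s0 S u.

Definition sobolev_prod (R : realType) (b : nat) (K0 s0 : R) (Cs : R -> R) : Prop :=
  forall (s : R), s0 <= s ->
  forall (S1 S2 : {fset Zb b}) (u1 u2 : Zb b -> R[i]),
    sobn K0 s (sumset S1 S2) (convc S1 u1 S2 u2)
      <= 2^-1 * sobn K0 s0 S1 u1 * sobn K0 s S2 u2
         + Cs s / 2 * sobn K0 s S1 u1 * sobn K0 s0 S2 u2.

(* Main.v *)
Require Import Defs.
From HB Require Import structures.
From mathcomp Require Import all_boot all_order all_algebra.
From mathcomp Require Import finmap.
From mathcomp Require Import complex.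
From mathcomp Require Import all_classical all_reals.
From mathcomp Require Import exp trigo.
From mathcomp Require Import ring lra.
Import Order.TTheory GRing.Theory Num.Theory.
Local Open Scope ring_scope.

Set Implicit Arguments.
Unset Strict Implicit.
Unset Printing Implicit Defensive.

Section Sums.
Variable R : realType.

Lemma sum_complex (I : Type) (r : seq I) (P : pred I) (F : I -> R) :
  \sum_(i <- r | P i) Complex (F i) 0 = Complex (\sum_(i <- r | P i) F i) 0.
Proof.
elim: r => [|x r IH]; first by rewrite !big_nil.
rewrite !big_cons; case: (P x) => //; rewrite IH.
by rewrite /GRing.add /= addr0.
Qed.

Lemma mul_complex (a b : R) : Complex a 0 * Complex b 0 = Complex (a * b) 0.
Proof. by rewrite /GRing.mul /= !mulr0 !mul0r subr0 addr0. Qed.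

Lemma sub_sum_le (I : choiceType) (A B : {fset I}) (G : I -> R) :
  (A `<=` B)%fset -> (forall x, x \in B -> 0 <= G x) ->
  \sum_(i <- A) G i <= \sum_(i <- B) G i.
Proof.
move=> AB G0; rewrite [X in _ <= X](big_fsetID _ (mem A)) /=.
have -> : \sum_(i <- [fset x in B | x \in A]%fset) G i = \sum_(i <- A) G i.
  apply: eq_fbigl => x; rewrite !inE /=; apply/andP/idP => [[]//|xA].
  by split => //; apply: (fsubsetP AB).
rewrite lerDl big_seq; apply: sumr_ge0 => x.
by rewrite !inE /= => /andP[/G0].
Qed.

Lemma term_le_sum (I : choiceType) (B : {fset I}) (G : I -> R) x :
  x \in B -> (forall y, y \in B -> 0 <= G y) -> G x <= \sum_(i <- B) G i.
Proof.
move=> xB G0; rewrite (_ : G x = \sum_(i <- [fset x]%fset) G i); last by rewrite big_seq_fset1.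
by apply: sub_sum_le => //; rewrite fsub1set.
Qed.

Lemma sum_ge0s (I : Type) (r : seq I) (P : pred I) (F : I -> R) :
  (forall i, P i -> 0 <= F i) -> 0 <= \sum_(i <- r | P i) F i.
Proof. by move=> H; apply: sumr_ge0. Qed.

Lemma CS (I : Type) (r : seq I) (f g w : I -> R) :
  (forall i, 0 <= w i) ->
  (\sum_(i <- r) f i * g i * w i) ^+ 2
    <= (\sum_(i <- r) f i ^+ 2 * w i) * (\sum_(i <- r) g i ^+ 2 * w i).
Proof.
move=> w0.
set A := \sum_(i <- r) f i ^+ 2 * w i.
set B := \sum_(i <- r) f i * g i * w i.
set C := \sum_(i <- r) g i ^+ 2 * w i.
have q t : 0 <= A + 2 * t * B + t ^+ 2 * C.
  have -> : A + 2 * t * B + t ^+ 2 * C = \sum_(i <- r) (f i + t * g i) ^+ 2 * w i.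
    rewrite /A /B /C !mulr_sumr -!big_split /=; apply: eq_bigr => i _; ring.
  by apply: sumr_ge0 => i _; rewrite mulr_ge0 ?sqr_ge0.
have C0 : 0 <= C by apply: sumr_ge0 => i _; rewrite mulr_ge0 ?sqr_ge0.
have A0 : 0 <= A by apply: sumr_ge0 => i _; rewrite mulr_ge0 ?sqr_ge0.
have [Cz|Cp] := eqVneq C 0.
  have [Bz|Bn] := eqVneq B 0; first by rewrite Bz Cz mulr0 expr2 mul0r.
  have := q (- (A + 1) / (2 * B)); rewrite Cz mulr0 addr0.
  have -> : 2 * (- (A + 1) / (2 * B)) * B = - (A + 1).
    by field; rewrite Bn.
  lra.
have Cg : 0 < C by rewrite lt_def Cp C0.
have := q (- B / C).
have -> : A + 2 * (- B / C) * B + (- B / C) ^+ 2 * C = (A * C - B ^+ 2) / C.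
  by field; rewrite Cp.
rewrite pmulr_lge0 ?invr_gt0 // subr_ge0 mulrC //.
Qed.

Lemma mink (I : Type) (r : seq I) (f g h w : I -> R) (K : R) :
  0 <= K -> (forall i, 0 <= w i) -> (forall i, 0 <= h i) ->
  (forall i, h i <= f i + g i) ->
  Num.sqrt (K * \sum_(i <- r) h i ^+ 2 * w i)
    <= Num.sqrt (K * \sum_(i <- r) f i ^+ 2 * w i)
       + Num.sqrt (K * \sum_(i <- r) g i ^+ 2 * w i).
Proof.
move=> K0 w0 h0 hfg.
set A := \sum_(i <- r) f i ^+ 2 * w i.
set B := \sum_(i <- r) f i * g i * w i.
set C := \sum_(i <- r) g i ^+ 2 * w i.
have C0 : 0 <= C by apply: sumr_ge0 => i _; rewrite mulr_ge0 ?sqr_ge0.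
have A0 : 0 <= A by apply: sumr_ge0 => i _; rewrite mulr_ge0 ?sqr_ge0.
have cs := CS r f g w0.
have HB : B <= Num.sqrt A * Num.sqrt C.
  rewrite -sqrtrM // (le_trans (ler_norm B)) // -sqrtr_sqr.
  by rewrite ler_wsqrtr.
have H1 : \sum_(i <- r) h i ^+ 2 * w i <= (Num.sqrt A + Num.sqrt C) ^+ 2.
  apply: (@le_trans _ _ (A + 2 * B + C)).
    have -> : A + 2 * B + C = \sum_(i <- r) (f i + g i) ^+ 2 * w i.
      rewrite /A /B /C !mulr_sumr -!big_split /=; apply: eq_bigr => i _; ring.
    apply: ler_sum => i _; apply: ler_wpM2r => //.
    by rewrite ler_sqr ?nnegrE ?hfg // (le_trans (h0 i) (hfg i)).
  rewrite sqrrD !sqr_sqrtr //; lra.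
rewrite !sqrtrM // -mulrDr; apply: ler_wpM2l; first exact: sqrtr_ge0.
rewrite -[X in _ <= X]ger0_norm ?addr_ge0 ?sqrtr_ge0 // -sqrtr_sqr.
exact: ler_wsqrtr.
Qed.

End Sums.
Section Main.
Variable R : realType.
Variable bb : nat.
Variable nrm : forall m n : nat, 'M[R[i]]_(m, n) -> R.
Hypothesis hnrm : small_mx_norm nrm.
Variable K0 : R.
Hypothesis hK0 : 0 < K0.

Local Notation idx := (idx bb).
Local Notation cmx := (cmx R bb).

Lemma size_rowsof (C : {fset idx}) i : (size (rowsof C i) <= 2)%N.
Proof. by rewrite /rowsof size_filter (leq_trans (count_size _ _)) // size_enum_ord. Qed.

Lemma cabs0 : cabs (0 : R[i]) = 0.
Proof. by rewrite /cabs /= expr2 mul0r addr0 sqrtr0. Qed.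

Lemma cabsN1 : cabs (-1 : R[i]) = 1.
Proof. by rewrite /cabs /= oppr0 !expr2 mul0r addr0 mulrNN mulr1 sqrtr1. Qed.

Lemma cabs_real (r : R) : 0 <= r -> cabs (Complex r 0) = r.
Proof. by move=> r0; rewrite /cabs /= [0 ^+ 2]expr2 mul0r addr0 sqrtr_sqr ger0_norm. Qed.

Section NrmLemmas.
Variables m n : nat.
Hypotheses (hm : (m <= 2)%N) (hn : (n <= 2)%N).
Implicit Types U V : 'M[R[i]]_(m, n).

Lemma nrm_ge0 U : 0 <= nrm U.
Proof. by case: (hnrm.1 _ _ U U hm hn). Qed.
Lemma nrm_eq0 U : nrm U = 0 -> U = 0.
Proof. by case: (hnrm.1 _ _ U U hm hn). Qed.
Lemma nrmZ (c : R[i]) U : nrm (c *: U) = cabs c * nrm U.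
Proof. by case: (hnrm.1 _ _ U U hm hn). Qed.
Lemma nrmD U V : nrm (U + V) <= nrm U + nrm V.
Proof. by case: (hnrm.1 _ _ U V hm hn). Qed.
Lemma nrm0 : nrm (0 : 'M[R[i]]_(m, n)) = 0.
Proof. by rewrite -(scale0r (0 : 'M[R[i]]_(m, n))) nrmZ cabs0 mul0r. Qed.
Lemma nrmN U : nrm (- U) = nrm U.
Proof. by rewrite -scaleN1r nrmZ cabsN1 mul1r. Qed.
Lemma nrmB U V : nrm (U - V) <= nrm U + nrm V.
Proof. by rewrite -(nrmN V) nrmD. Qed.
Lemma nrm_sum (I : Type) (r : seq I) (F : I -> 'M[R[i]]_(m, n)) :
  nrm (\sum_(i <- r) F i) <= \sum_(i <- r) nrm (F i).
Proof.
elim: r => [|x r IH]; first by rewrite !big_nil nrm0.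
by rewrite !big_cons (le_trans (nrmD _ _)) // lerD2l.
Qed.
End NrmLemmas.

Lemma nrm_mul m k n (U : 'M[R[i]]_(m, k)) (W : 'M[R[i]]_(k, n)) :
  (m <= 2)%N -> (k <= 2)%N -> (n <= 2)%N -> nrm (U *m W) <= nrm U * nrm W.
Proof. by move=> *; apply: hnrm.2.1. Qed.


Definition fst_set (C : {fset idx}) : {fset Zb bb} := [fset k.1 | k in C]%fset.

Lemma partition_C (V : nmodType) (C : {fset idx}) (F : idx -> V) :
  \sum_(k <- C) F k =
  \sum_(j <- fst_set C) \sum_(r < size (rowsof C j)) F (j, nth ord0 (rowsof C j) r).
Proof.
rewrite (partition_big_imfset _ fst); apply: eq_bigr => j _.
rewrite -(big_mkord xpredT (fun r => F (j, nth ord0 (rowsof C j) r))).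
rewrite -(big_nth ord0 xpredT (fun a => F (j, a))).
rewrite -(big_map (pair j) xpredT F) -big_filter.
apply: perm_big; apply: uniq_perm.
- by rewrite filter_uniq // fset_uniq.
- rewrite map_inj_uniq; last by move=> a a' [].
  by rewrite filter_uniq // enum_uniq.
move=> [x1 x2]; rewrite mem_filter /=.
have [->|ne] := eqVneq x1 j.
  by rewrite (mem_map (fun a a' (e : (j, a) = (j, a')) => f_equal snd e)) mem_filter mem_enum andbT.
by apply/esym/mapP => -[a _ [e _]]; rewrite e eqxx in ne.
Qed.


Lemma block_mul (A C B : {fset idx}) (X Y : cmx) i i'' :
  block A B (mulm C X Y) i i'' =
  \sum_(j <- fst_set C) block A C X i j *m block C B Y j i''.
Proof.
apply/matrixP => p q; rewrite !mxE summxE /mulm partition_C.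
apply: eq_bigr => j _; rewrite !mxE; apply: eq_bigr => r _; by rewrite !mxE.
Qed.

Lemma nrm_block_ge0 (C B : {fset idx}) (M : cmx) i j : 0 <= nrm (block C B M i j).
Proof. exact: nrm_ge0 (size_rowsof _ _) (size_rowsof _ _) _. Qed.

Lemma brkM_ge0 (C B : {fset idx}) (M : cmx) n : 0 <= brkM nrm C B M n.
Proof.
rewrite /brkM; apply: (big_ind (fun x => 0 <= x)) => //; first by move=> x y x0 y0; rewrite le_max x0.
move=> k _; apply: (big_ind (fun x => 0 <= x)) => //; first by move=> x y x0 y0; rewrite le_max x0.
by move=> k' _; case: ifP => // _; apply: nrm_block_ge0.
Qed.

Lemma brkM_le (C B : {fset idx}) (M : cmx) n c : 0 <= c ->
  (forall k k', k \in C -> k' \in B -> k.1 - k'.1 = n ->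
     nrm (block C B M k.1 k'.1) <= c) -> brkM nrm C B M n <= c.
Proof.
move=> c0 H; rewrite /brkM big_seq; apply: bigmax_le => // k kC.
rewrite big_seq; apply: bigmax_le => // k' k'B.
by case: eqP => // e; apply: H.
Qed.

Lemma brkM_ge (C B : {fset idx}) (M : cmx) k k' : k \in C -> k' \in B ->
  nrm (block C B M k.1 k'.1) <= brkM nrm C B M (k.1 - k'.1).
Proof.
move=> kC k'B; rewrite /brkM.
apply: le_trans (le_bigmax_seq _ _ _ _ kC _) => //.
by apply: le_trans (le_bigmax_seq _ _ _ _ k'B _) => //; rewrite eqxx.
Qed.


Definition conv (A C B : {fset idx}) (X Y : cmx) (n : Zb bb) : R :=
  \sum_(n1 <- diffs A C) \sum_(n2 <- diffs C B | n1 + n2 == n)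
     brkM nrm A C X n1 * brkM nrm C B Y n2.

Lemma conv_ge0 A C B X Y n : 0 <= conv A C B X Y n.
Proof.
by apply: sumr_ge0 => n1 _; apply: sumr_ge0 => n2 _; rewrite mulr_ge0 ?brkM_ge0.
Qed.

Lemma brkM_mul (A C B : {fset idx}) (X Y : cmx) n :
  brkM nrm A B (mulm C X Y) n <= conv A C B X Y n.
Proof.
apply: brkM_le; first exact: conv_ge0.
move=> k k'' kA k''B e; rewrite block_mul.
apply: le_trans (nrm_sum (size_rowsof _ _) (size_rowsof _ _) _ _) _.
pose G n1 := \sum_(n2 <- diffs C B | n1 + n2 == n)
     brkM nrm A C X n1 * brkM nrm C B Y n2.
apply: (@le_trans _ _ (\sum_(j <- fst_set C) G (k.1 - j))).
  rewrite big_seq [X in _ <= X]big_seq; apply: ler_sum => j /imfsetP [k' k'C ->].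
  apply: le_trans (nrm_mul _ _ (size_rowsof _ _) (size_rowsof _ _) (size_rowsof _ _)) _.
  apply: (@le_trans _ _ (brkM nrm A C X (k.1 - k'.1) * brkM nrm C B Y (k'.1 - k''.1))).
    by apply: ler_pM; rewrite ?nrm_block_ge0 ?brkM_ge.
  rewrite /G big_fset_condE; apply: (term_le_sum (G := fun n2 => _ * brkM nrm C B Y n2)).
    rewrite !inE /=; apply/andP; split; first by apply: in_imfset2.
    by rewrite -e addrA subrK.
  by move=> y _; rewrite mulr_ge0 ?brkM_ge0.
have -> : \sum_(j <- fst_set C) G (k.1 - j) =
    \sum_(n1 <- [fset k.1 - j | j in fst_set C]%fset) G n1.
  rewrite [RHS]big_imfset //= => x y _ _ /addrI/oppr_inj; apply.
rewrite /conv; apply: (@sub_sum_le _ _ _ _ G).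
  apply/fsubsetP => x /imfsetP [j /imfsetP [k' k'C ->] ->] /=.
  exact: in_imfset2.
by move=> x _; apply: sumr_ge0 => n2 _; rewrite mulr_ge0 ?brkM_ge0.
Qed.


Lemma conv_out A C B X Y n : n \notin sumset (diffs A C) (diffs C B) ->
  conv A C B X Y n = 0.
Proof.
move=> nS; apply: big1_fset => n1 n1D _; apply: big1_fset => n2 n2D /eqP e.
by move: nS; rewrite -e in_imfset2.
Qed.

Lemma w_ge0 s (n : Zb bb) : 0 <= brk R n `^ (2 * s).
Proof. exact: powR_ge0. Qed.

Lemma tnorm_mul (s0 : R) (Cs : R -> R) (hprod : sobolev_prod bb K0 s0 Cs) s :
  s0 <= s -> forall (A C B : {fset idx}) (X Y : cmx),
  tnorm nrm K0 s A B (mulm C X Y) <=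
    2^-1 * tnorm nrm K0 s0 A C X * tnorm nrm K0 s C B Y
    + Cs s / 2 * tnorm nrm K0 s A C X * tnorm nrm K0 s0 C B Y.
Proof.
move=> hs A C B X Y.
pose u1 n := Complex (brkM nrm A C X n) 0.
pose u2 n := Complex (brkM nrm C B Y n) 0.
have E1 t : sobn K0 t (diffs A C) u1 = tnorm nrm K0 t A C X.
  rewrite /sobn /tnorm; congr (Num.sqrt (K0 * _)); apply: eq_bigr => n _.
  by rewrite cabs_real ?brkM_ge0.
have E2 t : sobn K0 t (diffs C B) u2 = tnorm nrm K0 t C B Y.
  rewrite /sobn /tnorm; congr (Num.sqrt (K0 * _)); apply: eq_bigr => n _.
  by rewrite cabs_real ?brkM_ge0.
have Ec n : convc (diffs A C) u1 (diffs C B) u2 n = Complex (conv A C B X Y n) 0.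
  rewrite /convc /conv -sum_complex; apply: eq_bigr => n1 _.
  by rewrite -sum_complex; apply: eq_bigr => n2 _; rewrite mul_complex.
rewrite -!E1 -!E2; apply: le_trans (hprod s hs _ _ u1 u2).
rewrite /tnorm /sobn; apply: ler_wsqrtr; apply: ler_wpM2l; first exact: ltW.
rewrite [X in _ <= X](eq_bigr (fun j => conv A C B X Y j ^+ 2 * brk R j `^ (2 * s))); last by move=> j _; rewrite Ec cabs_real ?conv_ge0.
set S := sumset _ _.
apply: (@le_trans _ _ (\sum_(n <- diffs A B) conv A C B X Y n ^+ 2 * brk R n `^ (2 * s))).
  apply: ler_sum => n _; apply: ler_wpM2r; first exact: w_ge0.
  by rewrite ler_sqr ?nnegrE ?brkM_ge0 ?conv_ge0 ?brkM_mul.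
apply: (@le_trans _ _ (\sum_(n <- (diffs A B `|` S)%fset) conv A C B X Y n ^+ 2 * brk R n `^ (2 * s))).
  apply: sub_sum_le; first exact: fsubsetUl.
  by move=> x _; rewrite mulr_ge0 ?sqr_ge0 ?w_ge0.
rewrite (big_fset_incl _ (fsubsetUr (diffs A B) S)) //.
by move=> x _ xS; rewrite conv_out // expr2 !mul0r.
Qed.


Lemma tnorm_ge0 s (A B : {fset idx}) (X : cmx) : 0 <= tnorm nrm K0 s A B X.
Proof. exact: sqrtr_ge0. Qed.

Lemma mem_rowsof (A : {fset idx}) i (p : 'I_(size (rowsof A i))) :
  (i, nth ord0 (rowsof A i) p) \in A.
Proof.
have := mem_nth ord0 (ltn_ord p); rewrite /rowsof mem_filter => /andP[] //.
Qed.

Lemma block_ext (A B : {fset idx}) (X X' : cmx) :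
  (forall k k', k \in A -> k' \in B -> X k k' = X' k k') ->
  forall i j, block A B X i j = block A B X' i j.
Proof. by move=> H i j; apply/matrixP => p q; rewrite !mxE H ?mem_rowsof. Qed.

Lemma tnorm_ext s (A B : {fset idx}) (X X' : cmx) :
  (forall k k', k \in A -> k' \in B -> X k k' = X' k k') ->
  tnorm nrm K0 s A B X = tnorm nrm K0 s A B X'.
Proof.
move=> H; rewrite /tnorm /brkM; congr (Num.sqrt (K0 * _)).
apply: eq_bigr => n _; congr (_ ^+ 2 * _); apply: eq_bigr => k _.
by apply: eq_bigr => k' _; rewrite (block_ext H).
Qed.

Lemma tnorm_sub s (A B : {fset idx}) (Z X Y : cmx) :
  (forall k k', k \in A -> k' \in B -> Z k k' = X k k' - Y k k') ->
  tnorm nrm K0 s A B Z <= tnorm nrm K0 s A B X + tnorm nrm K0 s A B Y.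
Proof.
move=> H; rewrite /tnorm; apply: mink => //; first exact: ltW.
- by move=> n; apply: w_ge0.
- by move=> n; apply: brkM_ge0.
move=> n; apply: brkM_le; first by rewrite addr_ge0 ?brkM_ge0.
move=> k k' kA k'B <-.
have -> : block A B Z k.1 k'.1 = block A B X k.1 k'.1 - block A B Y k.1 k'.1.
  by apply/matrixP => p q; rewrite !mxE H ?mem_rowsof.
apply: le_trans (nrmB (size_rowsof _ _) (size_rowsof _ _) _ _) _.
by apply: lerD; apply: brkM_ge.
Qed.

Lemma brk_gt0 (n : Zb bb) : 0 < brk R n.
Proof. by rewrite /brk ltr0n leq_max orbT. Qed.

Lemma tnorm_eq0 s (A B : {fset idx}) (X : cmx) : tnorm nrm K0 s A B X = 0 ->
  forall k k', k \in A -> k' \in B -> X k k' = 0.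
Proof.
move=> /eqP; rewrite /tnorm sqrtr_eq0 pmulr_rle0 // => S0 k k' kA k'B.
have kin : k.1 - k'.1 \in diffs A B by apply: in_imfset2.
have T := term_le_sum (G := fun n => brkM nrm A B X n ^+ 2 * brk R n `^ (2 * s)) kin.
have T' := le_trans (T (fun y _ => mulr_ge0 (sqr_ge0 _) (w_ge0 _ _))) S0.
move: T'; rewrite pmulr_lle0 ?powR_gt0 ?brk_gt0 // => T2.
have Bz : brkM nrm A B X (k.1 - k'.1) = 0.
  by apply/eqP; rewrite -sqrf_eq0 eq_le T2 sqr_ge0.
have Nz : nrm (block A B X k.1 k'.1) = 0.
  by apply/eqP; rewrite eq_le nrm_block_ge0 andbT -Bz brkM_ge.
have := nrm_eq0 (size_rowsof _ _) (size_rowsof _ _) Nz.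
have hp : (index k.2 (rowsof A k.1) < size (rowsof A k.1))%N.
  by rewrite index_mem /rowsof mem_filter mem_enum -surjective_pairing kA.
have hq : (index k'.2 (rowsof B k'.1) < size (rowsof B k'.1))%N.
  by rewrite index_mem /rowsof mem_filter mem_enum -surjective_pairing k'B.
move=> /matrixP /(_ (Ordinal hp) (Ordinal hq)).
rewrite !mxE /= !nth_index -?surjective_pairing //; by rewrite -index_mem.
Qed.


Section Bridge.
Variable B : {fset idx}.
Let x0 : idx := (0, ord0).
Let n := size (enum_fset B).
Let e (i : 'I_n) : idx := nth x0 (enum_fset B) i.

Lemma sum_B (V : nmodType) (F : idx -> V) : \sum_(k <- B) F k = \sum_(i < n) F (e i).
Proof. by rewrite (big_nth x0) big_mkord. Qed.

Lemma e_eq i j : (e i == e j) = (i == j).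
Proof.
rewrite /e nth_uniq ?fset_uniq //; by [].
Qed.

Lemma memB k : k \in B -> exists i : 'I_n, k = e i.
Proof.
move=> kB; have hi : (index k (enum_fset B) < n)%N by rewrite index_mem.
by exists (Ordinal hi); rewrite /e /= nth_index.
Qed.

Lemma delta_sum (F : 'I_n -> R[i]) a : \sum_(i < n) (e a == e i)%:R * F i = F a.
Proof.
rewrite (bigD1 a) //= eqxx mul1r big1 ?addr0 // => i ia.
by rewrite e_eq eq_sym (negPf ia) mul0r.
Qed.

Lemma inv_exists (Q : cmx) :
  (forall h : cvec R bb, (forall k, k \in B -> h k + \sum_(k' <- B) Q k k' * h k' = 0) ->
     forall k, k \in B -> h k = 0) ->
  exists X : cmx,
    (forall k k', k \in B -> k' \in B ->
       \sum_(j <- B) X k j * ((j == k')%:R + Q j k') = (k == k')%:R) /\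
    (forall k k', k \in B -> k' \in B ->
       \sum_(j <- B) ((k == j)%:R + Q k j) * X j k' = (k == k')%:R).
Proof.
move=> Hinj.
pose A : 'M[R[i]]_n := \matrix_(i, j) ((i == j)%:R + Q (e i) (e j)).
have Au : A \in unitmx.
  rewrite unitmxE unitfE -det_tr; apply/negP => /det0P [v vn0 vA].
  pose h (k : idx) := \sum_(i < n) (k == e i)%:R * v 0 i.
  have he j : h (e j) = v 0 j by rewrite /h delta_sum.
  have H0 : forall k, k \in B -> h k = 0.
    apply: Hinj => k /memB [j ->]; rewrite he sum_B.
    transitivity ((v *m A^T) 0 j); last by rewrite vA mxE.
    rewrite mxE.
    under [X in _ = X]eq_bigr do rewrite !mxE mulrDr mulrC.
    rewrite big_split /=; congr (_ + _).
      rewrite (bigD1 j) //= eqxx mul1r big1 ?addr0 // => i ij.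
      by rewrite eq_sym (negPf ij) mul0r.
    by apply: eq_bigr => i _; rewrite he mulrC.
  move/eqP: vn0; apply; apply/rowP => j; rewrite mxE -he H0 //.
  by rewrite /e mem_nth.
pose Xi := invmx A.
pose X (k k' : idx) := \sum_(i < n) (k == e i)%:R * \sum_(j < n) (k' == e j)%:R * Xi i j.
have Xe a b : X (e a) (e b) = Xi a b by rewrite /X delta_sum delta_sum.
exists X; split => k k' /memB [a ->] /memB [b ->]; rewrite sum_B.
  have := congr1 (fun M : 'M_n => M a b) (mulVmx Au); rewrite !mxE e_eq => <-.
  by apply: eq_bigr => l _; rewrite Xe !mxE e_eq.
have := congr1 (fun M : 'M_n => M a b) (mulmxV Au); rewrite !mxE e_eq => <-.
by apply: eq_bigr => l _; rewrite Xe !mxE e_eq.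
Qed.

End Bridge.


Lemma mulmA (C1 C2 : {fset idx}) (X1 X2 X3 : cmx) k k' :
  mulm C2 (mulm C1 X1 X2) X3 k k' = mulm C1 X1 (mulm C2 X2 X3) k k'.
Proof.
rewrite /mulm; under eq_bigr do rewrite mulr_suml.
rewrite exchange_big; apply: eq_bigr => j _; rewrite mulr_sumr.
by apply: eq_bigr => c _; rewrite mulrA.
Qed.

Lemma fdelta (B : {fset idx}) (F : idx -> R[i]) k : k \in B ->
  \sum_(j <- B) (k == j)%:R * F j = F k.
Proof.
move=> kB; rewrite (big_fsetD1 k) //= eqxx mul1r big1_fset ?addr0 // => j.
by rewrite !inE => /andP[jk _] _; rewrite eq_sym (negPf jk) mul0r.
Qed.

Lemma construct (B C : {fset idx}) (M N P : cmx) :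
  left_inv B C N M ->
  (forall h : cvec R bb, (forall k, k \in B -> h k + \sum_(k' <- B) mulm C N P k k' * h k' = 0) ->
     forall k, k \in B -> h k = 0) ->
  exists Y : cmx, left_inv B C Y (addm M P) /\
    (forall k c, k \in B -> c \in C -> Y k c = N k c - mulm C N (mulm B P Y) k c).
Proof.
move=> hNM Hinj; have [X [HL HR]] := inv_exists Hinj.
exists (mulm B X N); split.
  move=> k k' kB k'B; rewrite mulmA -(HL k k' kB k'B) /mulm big_seq [RHS]big_seq.
  apply: eq_bigr => j jB; congr (_ * _); rewrite -(hNM j k' jB k'B) /mulm /addm -big_split /=.
  by apply: eq_bigr => c _; rewrite mulrDr.
move=> k c kB cC.
have E : N k c = mulm B X N k c + mulm B (mulm C N P) (mulm B X N) k c.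
  have -> : mulm B X N k c + mulm B (mulm C N P) (mulm B X N) k c =
      \sum_(j <- B) ((k == j)%:R + mulm C N P k j) * mulm B X N j c.
    under [RHS]eq_bigr do rewrite mulrDl.
    by rewrite big_split /= fdelta.
  rewrite /mulm; under eq_bigr do rewrite mulr_sumr.
  rewrite exchange_big /= -(fdelta (fun l => N l c) kB) big_seq [RHS]big_seq.
  apply: eq_bigr => l lB; rewrite -(HR k l kB lB) mulr_suml.
  by apply: eq_bigr => j _; rewrite mulrA.
rewrite mulmA in E; by rewrite {1}E addrK.
Qed.


Lemma tnorm_zero s (A B : {fset idx}) : tnorm nrm K0 s A B (fun _ _ => 0) = 0.
Proof.
rewrite /tnorm big1 ?mulr0 ?sqrtr0 // => n _.
have -> : brkM nrm A B (fun _ _ => 0) n = 0.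
  apply/eqP; rewrite eq_le brkM_ge0 andbT; apply: brkM_le => // k k' _ _ _.
  have -> : block A B (fun _ _ => 0 : R[i]) k.1 k'.1 = 0 by apply/matrixP => p q; rewrite !mxE.
  by rewrite nrm0 ?size_rowsof.
by rewrite expr2 !mul0r.
Qed.

Section Part1.
Variables (s0 : R) (Cs : R -> R).
Hypotheses (hC1 : forall s, s0 <= s -> 1 <= Cs s) (hC0 : Cs s0 = 1)
  (hprod : sobolev_prod bb K0 s0 Cs).

Lemma tnorm_mul0 (A C B : {fset idx}) (X Y : cmx) :
  tnorm nrm K0 s0 A B (mulm C X Y) <= tnorm nrm K0 s0 A C X * tnorm nrm K0 s0 C B Y.
Proof.
apply: le_trans (tnorm_mul hprod (lexx s0) A C B X Y) _; rewrite hC0; lra.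
Qed.

Local Notation tn := (tnorm nrm K0).

Lemma part1 (B C : {fset idx}) (M N P : cmx) :
  left_inv B C N M -> tn s0 B C N * tn s0 C B P <= 2^-1 ->
  exists NP : cmx,
    [/\ left_inv B C NP (addm M P),
        tn s0 B C NP <= 2 * tn s0 B C N
      & forall s, s0 <= s ->
        tn s B C NP
          <= (1 + 2 * Cs s * tn s0 B C N * tn s0 C B P) * tn s B C N
             + 2 * Cs s * tn s0 B C N ^+ 2 * tn s C B P
        /\ (1 + 2 * Cs s * tn s0 B C N * tn s0 C B P) * tn s B C N
             + 2 * Cs s * tn s0 B C N ^+ 2 * tn s C B P
           <= 2 * Cs s * (tn s B C N + tn s0 B C N ^+ 2 * tn s C B P)].
Proof.
move=> hNM hab.
set a := tn s0 B C N; set b := tn s0 C B P.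
have a0 : 0 <= a by apply: tnorm_ge0.
have b0 : 0 <= b by apply: tnorm_ge0.
have Hinj : forall h : cvec R bb,
    (forall k, k \in B -> h k + \sum_(k' <- B) mulm C N P k k' * h k' = 0) ->
    forall k, k \in B -> h k = 0.
  move=> h Hh.
  set col := [fset colidx bb]%fset.
  have E : tn s0 B col (colm h) <= tn s0 B col (fun _ _ => 0)
              + tn s0 B col (mulm B (mulm C N P) (colm h)).
    apply: tnorm_sub => k c kB; rewrite inE => /eqP ->.
    rewrite /colm eqxx sub0r /mulm.
    have := Hh k kB; move/eqP; rewrite addr_eq0 => /eqP ->; congr (- _).
    by apply: eq_bigr => k' _; rewrite eqxx.
  rewrite tnorm_zero add0r in E.
  have E2 := le_trans E (tnorm_mul0 _ _ _ _ _).
  have E3 := tnorm_mul0 B C B N P.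
  have Z0 : tn s0 B col (colm h) = 0.
    have z0 := tnorm_ge0 s0 B col (colm h).
    have q0 := tnorm_ge0 s0 B B (mulm C N P).
    set z := tn s0 B col (colm h) in E2 z0 *.
    set q := tn s0 B B (mulm C N P) in E2 E3 q0 *.
    have : q * z <= 2^-1 * z by apply: ler_wpM2r => //; apply: le_trans E3 hab.
    by move=> H; apply/eqP; rewrite eq_le z0 andbT; lra.
  move=> k kB; have := tnorm_eq0 Z0 kB (fset11 (colidx bb)).
  by rewrite /colm eqxx.
have [Y [hY eY]] := construct hNM Hinj.
exists Y.
have eYs s : tn s B C Y <= tn s B C N + tn s B C (mulm C N (mulm B P Y)).
  by apply: tnorm_sub.
set y := tn s0 B C Y.
have y0 : 0 <= y by apply: tnorm_ge0.
have W0 : tn s0 C C (mulm B P Y) <= b * y by apply: tnorm_mul0.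
have w0 : 0 <= tn s0 C C (mulm B P Y) by apply: tnorm_ge0.
have Y2 : y <= 2 * a.
  have H1 := le_trans (eYs s0) (lerD (lexx _) (tnorm_mul0 _ _ _ _ _)).
  have H2 : a * tn s0 C C (mulm B P Y) <= a * (b * y) by apply: ler_wpM2l.
  have H3 : a * (b * y) <= 2^-1 * y by rewrite mulrA; apply: ler_wpM2r.
  rewrite -/a -/y in H1; lra.
split => // s hs.
have C1 := hC1 hs.
set c := Cs s.
set Ns := tn s B C N; set Ps := tn s C B P; set Ys := tn s B C Y.
have Ns0 : 0 <= Ns by apply: tnorm_ge0.
have Ps0 : 0 <= Ps by apply: tnorm_ge0.
have Ys0 : 0 <= Ys by apply: tnorm_ge0.
set Ws := tn s C C (mulm B P Y).
set Wz := tn s0 C C (mulm B P Y).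
have Ws0 : 0 <= Ws by apply: tnorm_ge0.
have Zs := tnorm_mul hprod hs B C C N (mulm B P Y).
have Wsb := tnorm_mul hprod hs C B C P Y.
rewrite -/a -/Ns -/Ws -/Wz -/c in Zs.
rewrite -/b -/Ps -/Ys -/y -/c -/Ws in Wsb.
have Y1 := eYs s; rewrite -/Ys -/Ns in Y1.
set t := a * b.
have t0 : 0 <= t by rewrite mulr_ge0.
have aWs : a * Ws <= 2^-1 * t * Ys + c * (a ^+ 2 * Ps).
  apply: le_trans (ler_wpM2l a0 Wsb) _.
  have : a * (c / 2 * Ps * y) <= a * (c / 2 * Ps * (2 * a)).
    by apply: ler_wpM2l => //; apply: ler_wpM2l => //; rewrite mulr_ge0 ?divr_ge0 ?(le_trans ler01 C1).
  move=> H.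
  have E1 : a * (2^-1 * b * Ys) = 2^-1 * t * Ys by rewrite /t; ring.
  have E2 : a * (c / 2 * Ps * (2 * a)) = c * (a ^+ 2 * Ps) by field.
  rewrite mulrDr; lra.
have NsWz : Ns * Wz <= 2 * t * Ns.
  apply: le_trans (_ : Ns * (b * (2 * a)) <= _).
    by apply: ler_wpM2l => //; apply: le_trans W0 _; apply: ler_wpM2l.
  by rewrite le_eqVlt; apply/orP; left; apply/eqP; rewrite /t; ring.
have q0 : 0 <= a ^+ 2 * Ps by rewrite mulr_ge0 ?sqr_ge0.
set q := a ^+ 2 * Ps in aWs q0 *.
have Zs' : tn s B C (mulm C N (mulm B P Y)) <= 4^-1 * t * Ys + c / 2 * q + c * t * Ns.
  apply: le_trans Zs _.
  have E1 : 2^-1 * a * Ws <= 2^-1 * (2^-1 * t * Ys + c * q) by rewrite -mulrA; apply: (ler_wpM2l _ aWs); lra.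
  have E2 : c / 2 * Ns * Wz <= c / 2 * (2 * t * Ns).
    by rewrite -mulrA; apply: ler_wpM2l => //; rewrite divr_ge0 ?(le_trans ler01 C1).
  apply: le_trans (lerD E1 E2) _.
  by rewrite le_eqVlt; apply/orP; left; apply/eqP; field.
have tb : t <= 2^-1 by [].
have cq : 0 <= c * q by rewrite mulr_ge0 ?(le_trans ler01 C1).
have ctN : 0 <= c * t * Ns by rewrite !mulr_ge0 ?(le_trans ler01 C1).
have Yfin : Ys <= (1 + 2 * c * t) * Ns + 2 * c * q.
  have H : (1 - 4^-1 * t) * Ys <= (1 + c * t) * Ns + c / 2 * q.
    have := le_trans Y1 (lerD (lexx Ns) Zs'); lra.
  have pos : 0 < 1 - 4^-1 * t by lra.
  rewrite -(ler_pM2l pos); apply: le_trans H _.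
  have : (1 + c * t) * Ns + c / 2 * q <= (1 - 4^-1 * t) * ((1 + 2 * c * t) * Ns + 2 * c * q).
    have T1 : c * t * Ns * t <= c * t * Ns * 2^-1.
      by apply: ler_wpM2l => //; lra.
    have T2 : t * (c * q) <= 2^-1 * (c * q) by apply: ler_wpM2r.
    have T4 : 0 <= t * Ns by rewrite mulr_ge0.
    have T3 : t * Ns <= c * t * Ns.
      have cC : 0 <= c - 1 by rewrite subr_ge0.
      have := mulr_ge0 cC T4; rewrite mulrBl mul1r mulrA subr_ge0 //.
    have -> : (1 - 4^-1 * t) * ((1 + 2 * c * t) * Ns + 2 * c * q) =
      Ns + 2 * (c * t * Ns) - 4^-1 * (t * Ns) - 2^-1 * (c * t * Ns * t)
      + 2 * (c * q) - 2^-1 * (t * (c * q)) by field.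
    lra.
  by [].
have e1 : 2 * c * a * b = 2 * c * t by rewrite /t; ring.
have e2 : 2 * c * a ^+ 2 * Ps = 2 * c * q by rewrite /q; ring.
rewrite e1 e2; split => //.
have c0 : 0 <= c by apply: le_trans ler01 C1.
have h1 : c * t <= c * 2^-1 by apply: ler_wpM2l.
have h2 : (1 + 2 * c * t) * Ns <= (2 * c) * Ns.
  have C1c : 1 <= c by [].
  apply: ler_wpM2r => //; lra.
lra.
Qed.

End Part1.


Section Part2.
Local Notation vn := (vnorm nrm K0).
Local Notation col := [fset colidx bb]%fset.

Lemma vnorm_ge0 (B : {fset idx}) (h : cvec R bb) : 0 <= vn B h.
Proof. exact: tnorm_ge0. Qed.

Lemma vnorm_ext (B : {fset idx}) (h h' : cvec R bb) :
  (forall k, k \in B -> h k = h' k) -> vn B h = vn B h'.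
Proof.
move=> H; apply: tnorm_ext => k c kB _; rewrite /colm; case: ifP => // _; exact: H.
Qed.

Lemma vnorm_zero (B : {fset idx}) : vn B (fun _ => 0) = 0.
Proof.
rewrite /vnorm (@tnorm_ext _ _ _ _ (fun _ _ => 0)) ?tnorm_zero //.
by move=> k c _ _; rewrite /colm; case: ifP.
Qed.

Lemma vnorm_pos (B : {fset idx}) (h : cvec R bb) :
  (exists2 k, k \in B & h k != 0) -> 0 < vn B h.
Proof.
move=> [k kB hk]; rewrite lt_def vnorm_ge0 andbT; apply/eqP => /tnorm_eq0 H.
by move: hk; have := H k (colidx bb) kB (fset11 _); rewrite /colm eqxx => ->; rewrite eqxx.
Qed.

Lemma vnorm_sub (B : {fset idx}) (g h1 h2 : cvec R bb) :
  (forall k, k \in B -> g k = h1 k - h2 k) -> vn B g <= vn B h1 + vn B h2.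
Proof.
move=> H; apply: tnorm_sub => k c kB _; rewrite /colm; case: ifP => _.
  exact: H.
by rewrite subr0.
Qed.

Lemma matvec_mulm (C B : {fset idx}) (X Y : cmx) (h : cvec R bb) k :
  matvec C (mulm B X Y) h k = matvec B X (matvec C Y h) k.
Proof.
rewrite /matvec /mulm; under eq_bigr do rewrite mulr_suml.
rewrite exchange_big; apply: eq_bigr => j _; rewrite mulr_sumr.
by apply: eq_bigr => c _; rewrite mulrA.
Qed.

Lemma colm_matvec (B : {fset idx}) (M : cmx) (h : cvec R bb) k c :
  colm (matvec B M h) k c = mulm B M (colm h) k c.
Proof.
rewrite /colm /mulm /matvec; case: ifP => // _.
by rewrite big1 // => k' _; rewrite mulr0.
Qed.

Lemma vbound (C B : {fset idx}) (M : cmx) : exists K, 0 <= K /\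
  forall h : cvec R bb, vn C (matvec B M h) <= K * vn B h.
Proof.
set D := diffs C col; set D1 := diffs C B; set D2 := diffs B col.
set F := \sum_(n1 <- D1) brkM nrm C B M n1.
have F0 : 0 <= F by apply: sumr_ge0 => n _; apply: brkM_ge0.
set SD := \sum_(n <- D) (1 : R); set S2 := \sum_(n <- D2) (1 : R).
have SD0 : 0 <= SD by apply: sumr_ge0.
have S20 : 0 <= S2 by apply: sumr_ge0.
exists (Num.sqrt (SD * F ^+ 2 * S2)); split; first exact: sqrtr_ge0.
move=> h; set G := colm h.
set g := brkM nrm B col G.
set T := \sum_(n2 <- D2) g n2.
have T0 : 0 <= T by apply: sumr_ge0 => n _; apply: brkM_ge0.
have st1 n : brkM nrm C col (mulm B M G) n <= F * T.
  apply: le_trans (brkM_mul _ _ _ _ _ _) _.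
  rewrite /conv /F mulr_suml; apply: ler_sum => n1 _; rewrite mulr_sumr.
  rewrite [X in _ <= X](bigID (fun n2 => n1 + n2 == n)) /= lerDl.
  by apply: sumr_ge0 => n2 _; rewrite mulr_ge0 ?brkM_ge0.
have st3 : T ^+ 2 <= S2 * \sum_(n <- D2) g n ^+ 2.
  have := @CS R _ D2 (fun _ => 1) g (fun _ => 1) (fun _ => ler01).
  rewrite /T /S2; under eq_bigr do rewrite mul1r mulr1.
  under [X in _ <= X * _]eq_bigr do rewrite expr1n mulr1.
  by under [X in _ <= _ * X]eq_bigr do rewrite mulr1.
have -> : vn C (matvec B M h) = tnorm nrm K0 0 C col (mulm B M G).
  by apply: tnorm_ext => k c _ _; rewrite colm_matvec.
rewrite /vnorm /tnorm -/G -/D -/D2 -sqrtrM ?mulr_ge0 //; apply: ler_wsqrtr.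
under eq_bigr do rewrite mulr0 powRr0 mulr1.
under [X in _ <= _ * (_ * X)]eq_bigr do rewrite mulr0 powRr0 mulr1.
rewrite -/g mulrCA; apply: ler_wpM2l; first exact: ltW.
apply: (@le_trans _ _ (SD * (F * T) ^+ 2)).
  rewrite /SD mulr_suml; apply: ler_sum => n _; rewrite mul1r.
  by rewrite ler_sqr ?nnegrE ?brkM_ge0 ?mulr_ge0 ?st1.
rewrite exprMn -!mulrA; apply: ler_wpM2l => //.
by do 2 (apply: ler_wpM2l => //).
Qed.



Local Notation on := (opnorm nrm K0).

Lemma opnorm_le (C B : {fset idx}) (M : cmx) x : 0 <= x ->
  (forall h : cvec R bb, (exists2 k, k \in B & h k != 0) ->
     vn C (matvec B M h) <= x * vn B h) -> on C B M <= x.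
Proof.
move=> x0 H; rewrite /opnorm.
case: (pselect ([set vn C (matvec B M h) / vn B h
      | h in [set h : cvec R bb | exists2 k, k \in B & h k != 0]] !=set0)%classic)
  => [En|/nonemptyPn ->]; last by rewrite sup0.
apply: ge_sup En _ => r [h hn hr]; rewrite -hr.
by rewrite ler_pdivrMr ?vnorm_pos //; apply: H.
Qed.

Lemma opnorm_hasub (C B : {fset idx}) (M : cmx) :
  has_ubound [set vn C (matvec B M h) / vn B h
      | h in [set h : cvec R bb | exists2 k, k \in B & h k != 0]]%classic.
Proof.
have [K [K0' HK]] := vbound C B M.
exists K => r [h hn hr]; rewrite -hr ler_pdivrMr ?vnorm_pos //; exact: HK.
Qed.

Lemma opnorm_bound (C B : {fset idx}) (M : cmx) (h : cvec R bb) :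
  vn C (matvec B M h) <= on C B M * vn B h.
Proof.
case: (pselect (exists2 k, k \in B & h k != 0)) => [hn|hz].
  have hs : has_sup [set vn C (matvec B M h) / vn B h
      | h in [set h : cvec R bb | exists2 k, k \in B & h k != 0]]%classic.
    by split; [exists (vn C (matvec B M h) / vn B h); exists h | exact: opnorm_hasub].
  have := sup_upper_bound hs (ex_intro2 _ _ h hn erefl).
  by rewrite ler_pdivrMr ?vnorm_pos.
have hz' : forall k, k \in B -> h k = 0.
  by move=> k kB; apply/eqP; apply/negPn/negP => hk; apply: hz; exists k.
rewrite (@vnorm_ext B h (fun _ => 0)) // vnorm_zero mulr0.
rewrite (@vnorm_ext C _ (fun _ => 0)) ?vnorm_zero //.
move=> k _; rewrite /matvec big_seq big1 // => k' k'B; by rewrite hz' ?mulr0.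
Qed.

Lemma opnorm_ge0 (C B : {fset idx}) (M : cmx) : 0 <= on C B M.
Proof.
rewrite /opnorm.
case: (pselect ([set vn C (matvec B M h) / vn B h
      | h in [set h : cvec R bb | exists2 k, k \in B & h k != 0]] !=set0)%classic)
  => [En|/nonemptyPn ->]; last by rewrite sup0.
have [r [h hn _]] := En.
apply: le_trans (sup_upper_bound (conj En (opnorm_hasub C B M)) (ex_intro2 _ _ h hn erefl)).
by rewrite divr_ge0 ?vnorm_ge0.
Qed.

Lemma part2 (B C : {fset idx}) (M N P : cmx) :
  left_inv B C N M -> on B C N * on C B P <= 2^-1 ->
  exists NP : cmx, left_inv B C NP (addm M P) /\ on B C NP <= 2 * on B C N.
Proof.
move=> hNM hab.
set a := on B C N; set b := on C B P.
have a0 : 0 <= a by apply: opnorm_ge0.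
have b0 : 0 <= b by apply: opnorm_ge0.
have Hinj : forall h : cvec R bb,
    (forall k, k \in B -> h k + \sum_(k' <- B) mulm C N P k k' * h k' = 0) ->
    forall k, k \in B -> h k = 0.
  move=> h Hh.
  set u := matvec B P h.
  have E : vn B h <= vn B (fun _ => 0) + vn B (matvec C N u).
    apply: vnorm_sub => k kB; rewrite sub0r /u -matvec_mulm /matvec.
    by have := Hh k kB => /eqP; rewrite addr_eq0 => /eqP.
  rewrite vnorm_zero add0r in E.
  have E1 := opnorm_bound B C N u; rewrite -/a in E1.
  have E2 := opnorm_bound C B P h; rewrite -/b -/u in E2.
  have E3 : a * vn C u <= a * (b * vn B h) by apply: ler_wpM2l.
  have E4 : a * (b * vn B h) <= 2^-1 * vn B h by rewrite mulrA; apply: ler_wpM2r => //; apply: vnorm_ge0.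
  have Z0 : vn B h = 0.
    have := vnorm_ge0 B h => hge; apply/eqP; rewrite eq_le hge andbT; lra.
  move=> k kB; have := tnorm_eq0 Z0 kB (fset11 (colidx bb)).
  by rewrite /colm eqxx.
have [Y [hY eY]] := construct hNM Hinj.
exists Y; split => //.
apply: opnorm_le; first by rewrite mulr_ge0.
move=> h _.
set v := matvec C Y h.
have E : vn B v <= vn B (matvec C N h) + vn B (matvec C N (matvec B P v)).
  apply: vnorm_sub => k kB.
  have -> : matvec C N (matvec B P v) k = matvec C (mulm C N (mulm B P Y)) h k.
    rewrite matvec_mulm; congr (matvec _ _ _ _); apply: funext => c'.
    by rewrite matvec_mulm.
  rewrite /v /matvec -sumrB big_seq [in RHS]big_seq; apply: eq_bigr => c cC.
  by rewrite eY // mulrBl.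
have E1 := opnorm_bound B C N h; rewrite -/a in E1.
have E2 := opnorm_bound B C N (matvec B P v); rewrite -/a in E2.
have E3 := opnorm_bound C B P v; rewrite -/b in E3.
have v0 := vnorm_ge0 B v.
have E4 : a * vn C (matvec B P v) <= a * (b * vn B v) by apply: ler_wpM2l.
have E5 : a * (b * vn B v) <= 2^-1 * vn B v by rewrite mulrA; apply: ler_wpM2r.
lra.
Qed.

End Part2.

End Main.

Theorem lemma3p9 (R : realType) (d nu : nat) (hd : (1 <= d)%N) (hnu : (1 <= nu)%N)
  (s0 : R) (hs0 : (nu + d)%:R / 2 < s0)
  (nrm : forall m n : nat, 'M[R[i]]_(m, n) -> R) (hnrm : small_mx_norm nrm)
  (K0 : R) (hK0 : 0 < K0) (Csob : R -> R)
  (hCsob1 : forall s, s0 <= s -> 1 <= Csob s) (hCsob0 : Csob s0 = 1)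
  (hsup : sobolev_sup (nu + d) K0 s0) (hprod : sobolev_prod (nu + d) K0 s0 Csob) :
  exists Cs : R -> R,
  forall (B C : {fset idx (nu + d)}) (M N : cmx R (nu + d)),
    left_inv B C N M ->
    (forall P : cmx R (nu + d),
       tnorm nrm K0 s0 B C N * tnorm nrm K0 s0 C B P <= 2^-1 ->
       exists NP : cmx R (nu + d),
         [/\ left_inv B C NP (addm M P),
             tnorm nrm K0 s0 B C NP <= 2 * tnorm nrm K0 s0 B C N
           & forall s, s0 <= s ->
             tnorm nrm K0 s B C NP
               <= (1 + Cs s * tnorm nrm K0 s0 B C N * tnorm nrm K0 s0 C B P)
                    * tnorm nrm K0 s B C N
                  + Cs s * tnorm nrm K0 s0 B C N ^+ 2 * tnorm nrm K0 s C B P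
             /\ (1 + Cs s * tnorm nrm K0 s0 B C N * tnorm nrm K0 s0 C B P)
                    * tnorm nrm K0 s B C N
                  + Cs s * tnorm nrm K0 s0 B C N ^+ 2 * tnorm nrm K0 s C B P
                <= Cs s * (tnorm nrm K0 s B C N
                           + tnorm nrm K0 s0 B C N ^+ 2 * tnorm nrm K0 s C B P)])
    /\
    (forall P : cmx R (nu + d),
       opnorm nrm K0 B C N * opnorm nrm K0 C B P <= 2^-1 ->
       exists NP : cmx R (nu + d),
         left_inv B C NP (addm M P)
         /\ opnorm nrm K0 B C NP <= 2 * opnorm nrm K0 B C N).
Proof.
exists (fun s => 2 * Csob s) => B C M N hNM; split.
  move=> P hab.
  have [NP [h1 h2 h3]] := part1 hnrm hK0 hCsob1 hCsob0 hprod hNM hab.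
  by exists NP; split.
move=> P hab.
exact: (part2 hnrm hK0 hNM hab).
Qed.
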